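(* Let $1<a_1<a_2$ be coprime integers and $S=\langle a_1,a_2\rangle$. For all $t\in(1,\infty)$, $\Delta_t(S)$ is dense in $[|a_1a_2P(t)|,a_2]$, i.e. $[|a_1a_2P(t)|,a_2]$ is contained in the closure of $\Delta_t(S)$.
   Context: $S=\{\lambda_1a_1+\lambda_2a_2:\lambda_1,\lambda_2\in\mathbb{N}_0\}$. For $t\in[1,\infty)$ and $(u,v)\in\mathbb{R}^2$, $\|(u,v)\|_t=(|u|^t+|v|^t)^{1/t}$. For $x\in S$, $Z(x)=\{(m,n)\in\mathbb{N}_0^2: ma_1+na_2=x\}$, $\mathscr{L}_t(x)=\{\|f\|_t: f\in Z(x)\}$, $\Delta_t(x)$ is the set of differences between consecutive elements of $\mathscr{L}_t(x)$ (in increasing order), and $\Delta_t(S)=\bigcup_{x\in S}\Delta_t(x)$. Define $\mu_t(r)=\left\|\left(\frac{1-r}{a_1},\frac{r}{a_2}\right)\right\|_t$ for $r\in[0,1]$, $r_0(t)=\min\{r\in[0,1]:\mu_t(r)=\frac{1}{a_2}\}$, and $P(t)=\mu_t'(r_0(t))$ (derivative in $r$). *)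

(* Defs.v *)
From Stdlib Require Import Reals Lra Arith.
From Coquelicot Require Import Coquelicot.
Open Scope R_scope.

Definition rpow (x y : R) : R := if Rle_dec x 0 then 0 else Rpower x y.

Definition tnorm (t u v : R) : R :=
  rpow (rpow (Rabs u) t + rpow (Rabs v) t) (1 / t).

Definition inS (a1 a2 x : nat) : Prop :=
  exists l1 l2 : nat, x = (l1 * a1 + l2 * a2)%nat.

Definition factorization (a1 a2 x m n : nat) : Prop :=
  (m * a1 + n * a2)%nat = x.

Definition in_Lt (a1 a2 : nat) (t : R) (x : nat) (l : R) : Prop :=
  exists m n : nat, factorization a1 a2 x m n /\ l = tnorm t (INR m) (INR n).

Definition in_Delta_x (a1 a2 : nat) (t : R) (x : nat) (d : R) : Prop :=
  exists l1 l2 : R, in_Lt a1 a2 t x l1 /\ in_Lt a1 a2 t x l2 /\ l1 < l2 /\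
    (forall l, in_Lt a1 a2 t x l -> ~ (l1 < l < l2)) /\ d = l2 - l1.

Definition in_Delta_S (a1 a2 : nat) (t : R) (d : R) : Prop :=
  exists x : nat, inS a1 a2 x /\ in_Delta_x a1 a2 t x d.

Definition mu (a1 a2 : nat) (t r : R) : R :=
  tnorm t ((1 - r) / INR a1) (r / INR a2).

(* r0(t) = min { r in [0,1] : mu_t(r) = 1/a2 } (the set is closed, nonempty
   since r = 1 belongs to it, so its infimum is its minimum) *)
Definition r0 (a1 a2 : nat) (t : R) : R :=
  real (Glb_Rbar (fun r => 0 <= r <= 1 /\ mu a1 a2 t r = 1 / INR a2)).

Definition P (a1 a2 : nat) (t : R) : R := Derive (mu a1 a2 t) (r0 a1 a2 t).

(* Main.v *)
Require Import Defs.
From Stdlib Require Import Reals Lra Lia Arith.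
From Coquelicot Require Import Coquelicot.
Open Scope R_scope.

Lemma rpow_pos_eq x s : 0 < x -> rpow x s = exp (s * ln x).
Proof. intros H; unfold rpow, Rpower; destruct (Rle_dec x 0); [lra|reflexivity]. Qed.

Lemma rpow_nonpos x s : x <= 0 -> rpow x s = 0.
Proof. intros H; unfold rpow; destruct (Rle_dec x 0); [reflexivity|lra]. Qed.

Lemma rpow_ge0 x s : 0 <= rpow x s.
Proof. unfold rpow; destruct (Rle_dec x 0); [lra|]. unfold Rpower; left; apply exp_pos. Qed.

Lemma rpow_gt0 x s : 0 < x -> 0 < rpow x s.
Proof. intros H; rewrite rpow_pos_eq; auto; apply exp_pos. Qed.

Lemma rpow_cont_pos s x : 0 < x -> continuous (fun z => rpow z s) x.
Proof.
  intros Hx.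
  apply continuous_ext_loc with (g := fun z => exp (s * ln z)).
  - apply locally_interval with (a := Finite 0) (b := p_infty); simpl; auto.
    intros y Hy _; rewrite rpow_pos_eq; auto.
  - apply (@ex_derive_continuous R_AbsRing R_NormedModule). auto_derive. lra.
Qed.

Lemma rpow_cont0 s : 0 < s -> continuous (fun z => rpow z s) 0.
Proof.
  intros Hs. unfold continuous. rewrite (rpow_nonpos 0 s) by lra.
  apply filterlim_locally. intros eps.
  exists (mkposreal (exp (ln eps / s)) (exp_pos _)).
  intros z Hz. change (Rabs (z - 0) < exp (ln eps / s)) in Hz.
  change (Rabs (rpow z s - 0) < eps).
  rewrite Rminus_0_r in *.
  destruct (Rle_dec z 0) as [Hz0|Hz0].
  - rewrite rpow_nonpos; auto. rewrite Rabs_R0. apply cond_pos.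
  - rewrite rpow_pos_eq by lra. rewrite Rabs_pos_eq by (left; apply exp_pos).
    rewrite Rabs_pos_eq in Hz by lra.
    assert (ln z < ln eps / s).
    { rewrite <- (ln_exp (ln eps / s)). apply ln_increasing; lra. }
    rewrite <- (exp_ln eps) by apply cond_pos.
    apply exp_increasing.
    apply Rmult_lt_compat_l with (r := s) in H; auto.
    replace (s * (ln eps / s)) with (ln eps) in H by (field; lra). lra.
Qed.

Lemma rpow_cont s x : 0 < s -> continuous (fun z => rpow z s) x.
Proof.
  intros Hs. destruct (Rtotal_order x 0) as [H|[H|H]].
  - apply continuous_ext_loc with (g := fun _ => 0).
    + apply locally_interval with (a := m_infty) (b := Finite 0); simpl; auto.
      intros y _ Hy; rewrite rpow_nonpos; lra.
    + apply continuous_const.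
  - subst; apply rpow_cont0; auto.
  - apply rpow_cont_pos; auto.
Qed.

Definition Sf (a1 a2 : nat) (t r : R) :=
  rpow (Rabs ((1 - r) / INR a1)) t + rpow (Rabs (r / INR a2)) t.
Definition kf (a1 a2 : nat) (t r : R) :=
  rpow (Rabs ((1 - r) / INR a1)) (t - 1) / INR a1 - rpow (Rabs (r / INR a2)) (t - 1) / INR a2.
Definition Gf (a1 a2 : nat) (t r : R) := rpow (Sf a1 a2 t r) (1 / t - 1) * kf a1 a2 t r.

Lemma mu_Sf a1 a2 t r : mu a1 a2 t r = rpow (Sf a1 a2 t r) (1 / t).
Proof. reflexivity. Qed.

Lemma Sf_pos a1 a2 t r : (0 < a1)%nat -> (0 < a2)%nat -> 0 < Sf a1 a2 t r.
Proof.
  intros H1 H2. unfold Sf.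
  assert (0 < INR a1) by (apply lt_0_INR; lia).
  assert (0 < INR a2) by (apply lt_0_INR; lia).
  destruct (Req_dec r 0) as [->|Hr].
  - pose proof (rpow_ge0 (Rabs (0 / INR a2)) t).
    assert (0 < rpow (Rabs ((1 - 0) / INR a1)) t); [|lra].
    apply rpow_gt0. apply Rabs_pos_lt. unfold Rdiv. apply Rmult_integral_contrapositive; split; [lra|].
    apply Rinv_neq_0_compat; lra.
  - pose proof (rpow_ge0 (Rabs ((1 - r) / INR a1)) t).
    assert (0 < rpow (Rabs (r / INR a2)) t); [|lra].
    apply rpow_gt0. apply Rabs_pos_lt. unfold Rdiv. apply Rmult_integral_contrapositive; split; [lra|].
    apply Rinv_neq_0_compat; lra.
Qed.

Lemma cont_rpow_abs_lin (c d s x : R) : 0 < s ->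
  continuous (fun r => rpow (Rabs ((c - r) / d)) s) x.
Proof.
  intros Hs.
  apply (continuous_comp (fun r => Rabs ((c - r) / d)) (fun z => rpow z s)).
  - apply continuous_Rabs_comp. apply (@ex_derive_continuous R_AbsRing R_NormedModule).
    auto_derive. auto.
  - apply rpow_cont; auto.
Qed.

Lemma cont_rpow_abs_lin2 (d s x : R) : 0 < s ->
  continuous (fun r => rpow (Rabs (r / d)) s) x.
Proof.
  intros Hs.
  apply (continuous_comp (fun r => Rabs (r / d)) (fun z => rpow z s)).
  - apply continuous_Rabs_comp. apply (@ex_derive_continuous R_AbsRing R_NormedModule).
    auto_derive. auto.
  - apply rpow_cont; auto.
Qed.

Lemma Sf_cont a1 a2 t x : 0 < t -> continuous (Sf a1 a2 t) x.
Proof.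
  intros Ht. unfold Sf.
  apply (continuous_plus (fun r => rpow (Rabs ((1 - r) / INR a1)) t) (fun r => rpow (Rabs (r / INR a2)) t)).
  - apply cont_rpow_abs_lin; auto.
  - apply cont_rpow_abs_lin2; auto.
Qed.

Lemma mu_cont a1 a2 t x : 0 < t -> continuous (mu a1 a2 t) x.
Proof.
  intros Ht. apply (continuous_comp (Sf a1 a2 t) (fun z => rpow z (1/t))).
  - apply Sf_cont; auto.
  - apply rpow_cont. apply Rdiv_lt_0_compat; lra.
Qed.

Lemma kf_cont a1 a2 t x : 1 < t -> continuous (kf a1 a2 t) x.
Proof.
  intros Ht. unfold kf.
  apply (continuous_minus (fun r => rpow (Rabs ((1 - r) / INR a1)) (t - 1) / INR a1)
                          (fun r => rpow (Rabs (r / INR a2)) (t - 1) / INR a2)).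
  - apply (continuous_mult (fun r => rpow (Rabs ((1 - r) / INR a1)) (t - 1)) (fun _ => / INR a1)).
    + apply cont_rpow_abs_lin; lra.
    + apply continuous_const.
  - apply (continuous_mult (fun r => rpow (Rabs (r / INR a2)) (t - 1)) (fun _ => / INR a2)).
    + apply cont_rpow_abs_lin2; lra.
    + apply continuous_const.
Qed.

Lemma Gf_cont a1 a2 t x : (0 < a1)%nat -> (0 < a2)%nat -> 1 < t -> continuous (Gf a1 a2 t) x.
Proof.
  intros H1 H2 Ht. unfold Gf.
  apply (continuous_mult (fun r => rpow (Sf a1 a2 t r) (1 / t - 1)) (kf a1 a2 t)).
  - apply (continuous_comp (Sf a1 a2 t) (fun z => rpow z (1/t - 1))).
    + apply Sf_cont; lra.
    + apply rpow_cont_pos. apply Sf_pos; auto.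
  - apply kf_cont; auto.
Qed.

Lemma expm1 c x : 0 < x -> exp ((c - 1) * ln x) = exp (c * ln x) / x.
Proof.
  intros H. replace ((c - 1) * ln x) with (c * ln x + - ln x) by ring.
  rewrite exp_plus, exp_Ropp, exp_ln by auto. reflexivity.
Qed.

Lemma mu_deriv a1 a2 t r : (0 < a1)%nat -> (0 < a2)%nat -> 1 < t -> 0 < r < 1 ->
  is_derive (mu a1 a2 t) r (- Gf a1 a2 t r).
Proof.
  intros H1 H2 Ht Hr.
  assert (Ha : 0 < INR a1) by (apply lt_0_INR; lia).
  assert (Hb : 0 < INR a2) by (apply lt_0_INR; lia).
  set (a := INR a1) in *. set (b := INR a2) in *.
  apply is_derive_ext_loc with
    (f := fun z => exp ((1/t) * ln (exp (t * ln ((1 - z) / a)) + exp (t * ln (z / b))))).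
  - apply locally_interval with (a := Finite 0) (b := Finite 1); simpl; try lra.
    intros z Hz0 Hz1. rewrite mu_Sf. unfold Sf. fold a b.
    rewrite (Rabs_pos_eq ((1 - z) / a)) by (left; apply Rdiv_lt_0_compat; lra).
    rewrite (Rabs_pos_eq (z / b)) by (left; apply Rdiv_lt_0_compat; lra).
    rewrite (rpow_pos_eq ((1 - z) / a)) by (apply Rdiv_lt_0_compat; lra).
    rewrite (rpow_pos_eq (z / b)) by (apply Rdiv_lt_0_compat; lra).
    rewrite rpow_pos_eq; auto.
    pose proof (exp_pos (t * ln ((1 - z) / a))). pose proof (exp_pos (t * ln (z / b))). lra.
  - assert (Hu : 0 < (1 - r) / a) by (apply Rdiv_lt_0_compat; lra).
    assert (Hv : 0 < r / b) by (apply Rdiv_lt_0_compat; lra).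
    pose proof (exp_pos (t * ln ((1 - r) / a))). pose proof (exp_pos (t * ln (r / b))).
    auto_derive.
    + change ((1 + - r) * / a) with ((1 - r) / a). change (r * / b) with (r / b). lra.
    + change ((1 + - r) * / a) with ((1 - r) / a). change (r * / b) with (r / b).
      unfold Gf, kf, Sf. fold a b.
      rewrite (Rabs_pos_eq ((1 - r) / a)) by lra.
      rewrite (Rabs_pos_eq (r / b)) by lra.
      rewrite !(rpow_pos_eq ((1 - r) / a)) by lra.
      rewrite !(rpow_pos_eq (r / b)) by lra.
      rewrite rpow_pos_eq by lra.
      rewrite !expm1 by lra.
      set (u := (1 - r) / a) in *. set (v := r / b) in *.
      set (E1 := exp (t * ln u)) in *. set (E2 := exp (t * ln v)) in *.
      set (F := exp (1 / t * ln (E1 + E2))).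
      unfold u, v. field. repeat split; try lra. 
Qed.

Lemma rpow_lt x y s : 0 < s -> 0 <= x < y -> rpow x s < rpow y s.
Proof.
  intros Hs Hxy. destruct (Req_dec x 0) as [->|Hx].
  - rewrite rpow_nonpos by lra. apply rpow_gt0; lra.
  - unfold rpow. destruct (Rle_dec x 0); [lra|]. destruct (Rle_dec y 0); [lra|].
    apply Rlt_Rpower_l; lra.
Qed.

Lemma mu_MVT a1 a2 t u v : (0 < a1)%nat -> (0 < a2)%nat -> 1 < t -> 0 <= u <= v -> v <= 1 ->
  exists c, u <= c <= v /\ mu a1 a2 t v - mu a1 a2 t u = - Gf a1 a2 t c * (v - u).
Proof.
  intros H1 H2 Ht Huv Hv.
  destruct (MVT_gen (mu a1 a2 t) u v (fun x => - Gf a1 a2 t x)) as [c [Hc Heq]].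
  - intros x Hx. rewrite Rmin_left in Hx by lra. rewrite Rmax_right in Hx by lra.
    apply mu_deriv; auto; lra.
  - intros x _. apply continuity_pt_filterlim. apply mu_cont; lra.
  - rewrite Rmin_left in Hc by lra. rewrite Rmax_right in Hc by lra. exists c; auto.
Qed.

Lemma Gf_sign a1 a2 t r : (0 < a1)%nat -> (0 < a2)%nat ->
  (0 < Gf a1 a2 t r <-> 0 < kf a1 a2 t r) /\ (Gf a1 a2 t r < 0 <-> kf a1 a2 t r < 0).
Proof.
  intros H1 H2. unfold Gf.
  assert (0 < rpow (Sf a1 a2 t r) (1 / t - 1)) by (apply rpow_gt0, Sf_pos; auto).
  set (p := rpow (Sf a1 a2 t r) (1 / t - 1)) in *. set (k := kf a1 a2 t r).
  assert (k = (p * k) / p) by (field; lra).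
  split; split; intros.
  - rewrite H0. apply Rdiv_lt_0_compat; lra.
  - apply Rmult_lt_0_compat; lra.
  - rewrite H0. unfold Rdiv. apply Rmult_neg_pos; [lra| apply Rinv_0_lt_compat; lra].
  - rewrite Rmult_comm. apply Rmult_neg_pos; lra.
Qed.

Lemma kf_decr a1 a2 t u v : (0 < a1)%nat -> (0 < a2)%nat -> 1 < t -> 0 <= u < v -> v <= 1 ->
  kf a1 a2 t v < kf a1 a2 t u.
Proof.
  intros H1 H2 Ht Huv Hv.
  assert (Ha : 0 < INR a1) by (apply lt_0_INR; lia).
  assert (Hb : 0 < INR a2) by (apply lt_0_INR; lia).
  unfold kf.
  rewrite !Rabs_pos_eq by (apply Rmult_le_pos; [lra| left; apply Rinv_0_lt_compat; lra]).
  assert (rpow ((1 - v) / INR a1) (t - 1) < rpow ((1 - u) / INR a1) (t - 1)).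
  { apply rpow_lt; [lra|]. split. apply Rmult_le_pos; [lra| left; apply Rinv_0_lt_compat; lra].
    apply Rmult_lt_compat_r; [apply Rinv_0_lt_compat|]; lra. }
  assert (rpow (u / INR a2) (t - 1) < rpow (v / INR a2) (t - 1)).
  { apply rpow_lt; [lra|]. split. apply Rmult_le_pos; [lra| left; apply Rinv_0_lt_compat; lra].
    apply Rmult_lt_compat_r; [apply Rinv_0_lt_compat|]; lra. }
  unfold Rdiv at 1 3 5 7.
  assert (/ INR a1 > 0) by (apply Rinv_0_lt_compat; lra).
  assert (/ INR a2 > 0) by (apply Rinv_0_lt_compat; lra).
  nra.
Qed.

Lemma rpow_Rpower x s : 0 < x -> rpow x s = Rpower x s.
Proof. intros H; unfold rpow; destruct (Rle_dec x 0); [lra|reflexivity]. Qed.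

Lemma Rabs_div_pos x y : 0 < x -> 0 < y -> Rabs (x / y) = x / y.
Proof. intros; apply Rabs_pos_eq; left; apply Rdiv_lt_0_compat; auto. Qed.

Lemma mu_0 a1 a2 t : (0 < a1)%nat -> 0 < t -> mu a1 a2 t 0 = 1 / INR a1.
Proof.
  intros H1 Ht. assert (Ha : 0 < INR a1) by (apply lt_0_INR; lia).
  rewrite mu_Sf. unfold Sf.
  replace (0 / INR a2) with 0 by (unfold Rdiv; ring). rewrite Rabs_R0.
  rewrite (rpow_nonpos 0) by lra. replace (1 - 0) with 1 by ring.
  assert (0 < 1 / INR a1) by (apply Rdiv_lt_0_compat; lra).
  rewrite Rabs_div_pos by lra. rewrite Rplus_0_r.
  rewrite (rpow_Rpower (1 / INR a1)) by lra.
  rewrite rpow_Rpower by (apply exp_pos).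
  rewrite Rpower_mult. replace (t * (1 / t)) with 1 by (field; lra). apply Rpower_1; lra.
Qed.

Lemma mu_1 a1 a2 t : (0 < a2)%nat -> 0 < t -> mu a1 a2 t 1 = 1 / INR a2.
Proof.
  intros H1 Ht. assert (Ha : 0 < INR a2) by (apply lt_0_INR; lia).
  rewrite mu_Sf. unfold Sf.
  replace ((1 - 1) / INR a1) with 0 by (unfold Rdiv; ring). rewrite Rabs_R0.
  rewrite (rpow_nonpos 0) by lra.
  assert (0 < 1 / INR a2) by (apply Rdiv_lt_0_compat; lra).
  rewrite Rabs_div_pos by lra. rewrite Rplus_0_l.
  rewrite (rpow_Rpower (1 / INR a2)) by lra.
  rewrite rpow_Rpower by (apply exp_pos).
  rewrite Rpower_mult. replace (t * (1 / t)) with 1 by (field; lra). apply Rpower_1; lra.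
Qed.

Lemma Gf_0 a1 a2 t : (0 < a1)%nat -> (0 < a2)%nat -> 1 < t -> Gf a1 a2 t 0 = 1 / INR a1.
Proof.
  intros H1 H2 Ht. assert (Ha : 0 < INR a1) by (apply lt_0_INR; lia).
  unfold Gf, kf, Sf.
  replace (0 / INR a2) with 0 by (unfold Rdiv; ring). rewrite Rabs_R0.
  rewrite !(rpow_nonpos 0) by lra. replace (1 - 0) with 1 by ring.
  assert (0 < 1 / INR a1) by (apply Rdiv_lt_0_compat; lra).
  rewrite Rabs_div_pos by lra. rewrite Rplus_0_r.
  rewrite !(rpow_Rpower (1 / INR a1)) by lra.
  rewrite rpow_Rpower by (apply exp_pos).
  rewrite Rpower_mult.
  replace (0 / INR a2) with 0 by (unfold Rdiv; ring).
  rewrite Rminus_0_r.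
  transitivity ((Rpower (1 / INR a1) (t * (1 / t - 1)) * Rpower (1 / INR a1) (t - 1)) / INR a1).
  { unfold Rdiv. ring. }
  rewrite <- Rpower_plus. replace (t * (1 / t - 1) + (t - 1)) with 0 by (field; lra).
  rewrite Rpower_O by lra. reflexivity.
Qed.

Lemma kf_0 a1 a2 t : (0 < a1)%nat -> (0 < a2)%nat -> 1 < t -> 0 < kf a1 a2 t 0.
Proof.
  intros H1 H2 Ht. pose proof (Gf_0 a1 a2 t H1 H2 Ht).
  apply (proj1 (Gf_sign a1 a2 t 0 H1 H2)). rewrite H.
  apply Rdiv_lt_0_compat; [lra| apply lt_0_INR; lia].
Qed.

Lemma kf_1 a1 a2 t : (0 < a1)%nat -> (0 < a2)%nat -> 1 < t -> kf a1 a2 t 1 < 0.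
Proof.
  intros H1 H2 Ht. assert (Hb : 0 < INR a2) by (apply lt_0_INR; lia).
  unfold kf. replace ((1 - 1) / INR a1) with 0 by (unfold Rdiv; ring). rewrite Rabs_R0.
  rewrite rpow_nonpos by lra.
  assert (0 < 1 / INR a2) by (apply Rdiv_lt_0_compat; lra).
  rewrite Rabs_div_pos by lra.
  assert (0 < rpow (1 / INR a2) (t - 1) / INR a2) by (apply Rdiv_lt_0_compat; [apply rpow_gt0|]; lra).
  unfold Rdiv at 1. lra.
Qed.

Lemma rm_ex a1 a2 t : (0 < a1)%nat -> (0 < a2)%nat -> 1 < t ->
  exists rm, 0 < rm < 1 /\ (forall r, 0 <= r < rm -> 0 < kf a1 a2 t r) /\
    (forall r, rm < r <= 1 -> kf a1 a2 t r < 0) /\ kf a1 a2 t rm = 0.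
Proof.
  intros H1 H2 Ht.
  pose proof (kf_0 a1 a2 t H1 H2 Ht). pose proof (kf_1 a1 a2 t H1 H2 Ht).
  destruct (IVT_gen (kf a1 a2 t) 0 1 0) as [rm [Hrm Hk]].
  - intros x. apply continuity_pt_filterlim. apply kf_cont; auto.
  - rewrite Rmin_right, Rmax_left by lra. lra.
  - rewrite Rmin_left, Rmax_right in Hrm by lra.
    assert (rm <> 0) by (intros ->; lra). assert (rm <> 1) by (intros ->; lra).
    exists rm. split; [lra|]. split; [|split; auto].
    + intros r Hr. rewrite <- Hk. apply kf_decr; auto; lra.
    + intros r Hr. rewrite <- Hk. apply kf_decr; auto; lra.
Qed.

Lemma mu_decr_gen a1 a2 t rm u v : (0 < a1)%nat -> (0 < a2)%nat -> 1 < t ->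
  rm <= 1 -> (forall r, 0 <= r < rm -> 0 < kf a1 a2 t r) -> kf a1 a2 t rm = 0 ->
  0 <= u < v -> v <= rm -> mu a1 a2 t v < mu a1 a2 t u.
Proof.
  intros H1 H2 Ht Hrm1 Hpos H0 Huv Hv.
  set (w := (u + v) / 2).
  destruct (mu_MVT a1 a2 t u w) as [c [Hc E1]]; auto; unfold w; try lra.
  destruct (mu_MVT a1 a2 t w v) as [c' [Hc' E2]]; auto; unfold w; try lra.
  fold w in Hc, E1, Hc', E2.
  assert (0 < Gf a1 a2 t c) by (apply (proj1 (Gf_sign a1 a2 t c H1 H2)); apply Hpos; unfold w in *; lra).
  assert (0 <= Gf a1 a2 t c').
  { destruct (Req_dec c' rm) as [->|Hne].
    - unfold Gf; rewrite H0; lra.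
    - left; apply (proj1 (Gf_sign a1 a2 t c' H1 H2)); apply Hpos; unfold w in *; lra. }
  assert (0 < w - u) by (unfold w; lra). assert (0 < v - w) by (unfold w; lra).
  nra.
Qed.

Lemma mu_incr_gen a1 a2 t rm u v : (0 < a1)%nat -> (0 < a2)%nat -> 1 < t ->
  0 <= rm -> (forall r, rm < r <= 1 -> kf a1 a2 t r < 0) -> kf a1 a2 t rm = 0 ->
  rm <= u < v -> v <= 1 -> mu a1 a2 t u < mu a1 a2 t v.
Proof.
  intros H1 H2 Ht Hrm1 Hneg H0 Huv Hv.
  set (w := (u + v) / 2).
  destruct (mu_MVT a1 a2 t u w) as [c [Hc E1]]; auto; unfold w; try lra.
  destruct (mu_MVT a1 a2 t w v) as [c' [Hc' E2]]; auto; unfold w; try lra.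
  fold w in Hc, E1, Hc', E2.
  assert (Gf a1 a2 t c' < 0) by (apply (proj2 (Gf_sign a1 a2 t c' H1 H2)); apply Hneg; unfold w in *; lra).
  assert (Gf a1 a2 t c <= 0).
  { destruct (Req_dec c rm) as [->|Hne].
    - unfold Gf; rewrite H0; lra.
    - left; apply (proj2 (Gf_sign a1 a2 t c H1 H2)); apply Hneg; unfold w in *; lra. }
  assert (0 < w - u) by (unfold w; lra). assert (0 < v - w) by (unfold w; lra).
  nra.
Qed.

Lemma structure a1 a2 t : (1 < a1)%nat -> (a1 < a2)%nat -> 1 < t ->
  0 < r0 a1 a2 t < 1 /\ mu a1 a2 t (r0 a1 a2 t) = 1 / INR a2 /\
  P a1 a2 t = - Gf a1 a2 t (r0 a1 a2 t) /\ 0 < Gf a1 a2 t (r0 a1 a2 t) /\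
  (forall u v, 0 <= u < v -> v <= r0 a1 a2 t -> mu a1 a2 t v < mu a1 a2 t u) /\
  (forall r, r0 a1 a2 t <= r <= 1 -> mu a1 a2 t r <= 1 / INR a2).
Proof.
  intros H1 H12 Ht.
  assert (H1' : (0 < a1)%nat) by lia. assert (H2' : (0 < a2)%nat) by lia.
  assert (Ha : 0 < INR a1) by (apply lt_0_INR; lia).
  assert (Hab : INR a1 < INR a2) by (apply lt_INR; lia).
  assert (Hab' : 1 / INR a2 < 1 / INR a1).
  { unfold Rdiv; rewrite !Rmult_1_l; apply Rinv_lt_contravar; nra. }
  destruct (rm_ex a1 a2 t H1' H2' Ht) as [rm [Hrm [Hpos [Hneg H0]]]].
  pose proof (mu_decr_gen a1 a2 t rm) as Dec. pose proof (mu_incr_gen a1 a2 t rm) as Inc.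
  assert (Hmurm : mu a1 a2 t rm < 1 / INR a2).
  { rewrite <- (mu_1 a1 a2 t) by (auto; lra). apply Inc; auto; lra. }
  pose proof (mu_0 a1 a2 t H1' ltac:(lra)) as M0.
  destruct (IVT_gen (mu a1 a2 t) 0 rm (1 / INR a2)) as [r1 [Hr1 Hmu1]].
  - intros x. apply continuity_pt_filterlim. apply mu_cont; lra.
  - rewrite Rmin_right, Rmax_left; lra.
  - rewrite Rmin_left, Rmax_right in Hr1 by lra.
    assert (r1 <> 0) by (intros ->; lra). assert (r1 <> rm) by (intros ->; lra).
    assert (Hr0 : r0 a1 a2 t = r1).
    { unfold r0.
      rewrite (is_glb_Rbar_unique _ (Finite r1)); [reflexivity|].
      split.
      - intros r [Hr Hmr]. simpl.
        destruct (Rlt_dec r r1) as [Hlt|Hge]; [|lra].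
        exfalso. assert (mu a1 a2 t r1 < mu a1 a2 t r) by (apply Dec; auto; lra). lra.
      - intros b Hb. apply Hb. split; [lra|auto]. }
    rewrite Hr0.
    split; [lra|]. split; [auto|]. split.
    { unfold P. rewrite Hr0. apply is_derive_unique. apply mu_deriv; auto; lra. }
    split.
    { apply (proj1 (Gf_sign a1 a2 t r1 H1' H2')). apply Hpos; lra. }
    split.
    { intros u v Huv Hv. apply Dec; auto; lra. }
    intros r Hr. destruct (Rle_dec r rm).
    + destruct (Req_dec r r1) as [->|]; [lra|]. left. rewrite <- Hmu1. apply Dec; auto; lra.
    + rewrite <- (mu_1 a1 a2 t) by (auto; lra).
      destruct (Req_dec r 1) as [->|]; [lra|]. left. apply Inc; auto; lra.
Qed.

Lemma rpow_mul c x s : 0 < c -> 0 <= x -> rpow (c * x) s = Rpower c s * rpow x s.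
Proof.
  intros Hc Hx. destruct (Req_dec x 0) as [->|Hx0].
  - rewrite Rmult_0_r, rpow_nonpos by lra. ring.
  - rewrite !rpow_Rpower by nra. rewrite Rpower_mult_distr; auto; lra.
Qed.

Lemma tnorm_hom t c u v : 0 < t -> 0 < c -> tnorm t (c * u) (c * v) = c * tnorm t u v.
Proof.
  intros Ht Hc. unfold tnorm.
  rewrite !Rabs_mult, !(Rabs_pos_eq c) by lra.
  rewrite !rpow_mul by (try apply Rabs_pos; lra).
  rewrite <- Rmult_plus_distr_l.
  rewrite rpow_mul.
  - rewrite Rpower_mult. replace (t * (1 / t)) with 1 by (field; lra). rewrite Rpower_1; auto.
  - apply exp_pos.
  - pose proof (rpow_ge0 (Rabs u) t). pose proof (rpow_ge0 (Rabs v) t). lra.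
Qed.

Lemma length_mu a1 a2 t x m n : (0 < a1)%nat -> (0 < a2)%nat -> 0 < t -> (0 < x)%nat ->
  factorization a1 a2 x m n ->
  tnorm t (INR m) (INR n) = INR x * mu a1 a2 t (INR n * INR a2 / INR x).
Proof.
  intros H1 H2 Ht Hx Hf. unfold factorization in Hf.
  assert (Ha : 0 < INR a1) by (apply lt_0_INR; lia).
  assert (Hb : 0 < INR a2) by (apply lt_0_INR; lia).
  assert (HX : 0 < INR x) by (apply lt_0_INR; lia).
  assert (HXe : INR x = INR m * INR a1 + INR n * INR a2) by (rewrite <- Hf, plus_INR, !mult_INR; ring).
  unfold mu. rewrite <- tnorm_hom by auto. f_equal.
  - rewrite HXe. field. lra.
  - field. lra.
Qed.

Lemma choose_j (M : nat) rs r0' : 0 < INR M -> 0 <= rs <= r0' -> 1 / INR M < r0' ->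
  exists i : nat, INR (S i) / INR M <= r0' /\ INR i / INR M <= rs < (INR i + 2) / INR M.
Proof.
  intros HM Hrs Hr.
  assert (Hi : / INR M * INR M = 1) by (field; lra).
  assert (Hip : 0 < / INR M) by (apply Rinv_0_lt_compat; lra).
  destruct (nfloor_ex (INR M * rs)) as [n0 Hn0]; [nra|].
  destruct n0 as [|i].
  - exists 0%nat. simpl in *. unfold Rdiv in *. nra.
  - exists i. rewrite S_INR in *. unfold Rdiv in *.
    pose proof (pos_INR i). nra.
Qed.

Theorem proposition2 (a1 a2 : nat) (t : R) :
  (1 < a1)%nat -> (a1 < a2)%nat -> Nat.gcd a1 a2 = 1%nat -> 1 < t ->
  forall y : R,
    Rabs (INR a1 * INR a2 * P a1 a2 t) <= y <= INR a2 ->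
    forall eps : R, 0 < eps ->
      exists d : R, in_Delta_S a1 a2 t d /\ Rabs (d - y) < eps.
Proof.
  intros H1 H12 Hg Ht y Hy eps Heps.
  assert (H1' : (0 < a1)%nat) by lia. assert (H2' : (0 < a2)%nat) by lia.
  assert (Ha : 0 < INR a1) by (apply lt_0_INR; lia).
  assert (Hb : 0 < INR a2) by (apply lt_0_INR; lia).
  destruct (structure a1 a2 t H1 H12 Ht) as [Hr0 [Hmu0 [HP [HG0 [Dec Le]]]]].
  set (r0' := r0 a1 a2 t) in *.
  set (G := Gf a1 a2 t) in *.
  set (tau := y / (INR a1 * INR a2)).
  assert (Hab : 0 < INR a1 * INR a2) by nra.
  assert (HabP : Rabs (INR a1 * INR a2 * P a1 a2 t) = INR a1 * INR a2 * G r0').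
  { rewrite HP. rewrite Rabs_left1; [ring|]. nra. }
  assert (Htau1 : G r0' <= tau).
  { unfold tau. apply (Rmult_le_reg_l (INR a1 * INR a2)); auto.
    replace (INR a1 * INR a2 * (y / (INR a1 * INR a2))) with y by (field; lra). lra. }
  assert (Htau2 : tau <= G 0).
  { unfold G; rewrite Gf_0 by auto. unfold tau.
    apply (Rmult_le_reg_l (INR a1 * INR a2)); auto.
    replace (INR a1 * INR a2 * (y / (INR a1 * INR a2))) with y by (field; lra).
    replace (INR a1 * INR a2 * (1 / INR a1)) with (INR a2) by (field; lra). lra. }
  destruct (IVT_gen G 0 r0' tau) as [rs [Hrs HGrs]].
  { intros x. apply continuity_pt_filterlim. apply Gf_cont; auto. }
  { pose proof (Rmin_r (G 0) (G r0')). pose proof (Rmax_l (G 0) (G r0')). lra. }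
  rewrite Rmin_left, Rmax_right in Hrs by lra.
  assert (Hcont := Gf_cont a1 a2 t rs H1' H2' Ht).
  set (eps' := mkposreal (eps / (INR a1 * INR a2)) ltac:(apply Rdiv_lt_0_compat; lra)).
  destruct (proj1 (filterlim_locally _ _) Hcont eps') as [delta Hdelta].
  destruct (nfloor_ex (2 / delta + 1 / r0')) as [n Hn].
  { assert (0 < 2 / delta) by (apply Rdiv_lt_0_compat; [lra| apply cond_pos]).
    assert (0 < 1 / r0') by (apply Rdiv_lt_0_compat; lra). lra. }
  set (M := S n).
  assert (HM : INR M = INR n + 1) by (unfold M; apply S_INR).
  assert (HMp : 0 < INR M) by (pose proof (pos_INR n); lra).
  assert (HdM : 2 / INR M < delta).
  { assert (0 < delta) by apply cond_pos.
    assert (0 < 1 / r0') by (apply Rdiv_lt_0_compat; lra).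
    assert (2 / delta < INR M) by lra.
    unfold Rdiv in *. 
    assert (/ delta * delta = 1) by (field; lra).
    assert (/ INR M * INR M = 1) by (field; lra).
    assert (0 < / INR M) by (apply Rinv_0_lt_compat; lra). nra. }
  assert (HrM : 1 / INR M < r0').
  { assert (0 < delta) by apply cond_pos.
    assert (0 < 2 / delta) by (apply Rdiv_lt_0_compat; lra).
    assert (1 / r0' < INR M) by lra.
    unfold Rdiv in *.
    assert (/ r0' * r0' = 1) by (field; lra).
    assert (/ INR M * INR M = 1) by (field; lra).
    assert (0 < / INR M) by (apply Rinv_0_lt_compat; lra). nra. }
  destruct (choose_j M rs r0' HMp ltac:(lra) HrM) as [i [Hi1 Hi2]].
  assert (Hu0 : 0 <= INR i / INR M) by (apply Rdiv_le_0_compat; [apply pos_INR| lra]).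
  assert (HuvE : INR (S i) / INR M = INR i / INR M + 1 / INR M) by (rewrite S_INR; field; lra).
  assert (Hinv : 0 < 1 / INR M) by (apply Rdiv_lt_0_compat; lra).
  assert (HiM : (S i <= M)%nat).
  { apply INR_le. assert (INR (S i) / INR M * INR M = INR (S i)) by (field; lra).
    assert (INR (S i) / INR M < 1) by lra. nra. }
  set (x := (a1 * a2 * M)%nat).
  assert (Hx : (0 < x)%nat) by (unfold x, M; nia).
  assert (HX : INR x = INR a1 * INR a2 * INR M) by (unfold x; rewrite !mult_INR; ring).
  assert (Hfact : forall k, (k <= M)%nat -> factorization a1 a2 x (a2 * (M - k)) (a1 * k)).
  { intros k Hk. unfold factorization, x. assert (E : M = ((M - k) + k)%nat) by lia.
    set (p := (M - k)%nat) in *. rewrite E. ring. }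
  assert (HL : forall m q, factorization a1 a2 x m (a1 * q) ->
             tnorm t (INR m) (INR (a1 * q)) = INR x * mu a1 a2 t (INR q / INR M)).
  { intros m q Hf. rewrite (length_mu a1 a2 t x m (a1 * q)) by (auto; lra). f_equal. f_equal.
    rewrite HX, mult_INR. field. lra. }
  assert (Hwdec : forall u v, 0 <= u <= v -> v <= r0' -> mu a1 a2 t v <= mu a1 a2 t u).
  { intros u v Huv Hv. destruct (Req_dec u v) as [->|]; [lra|]. left; apply Dec; lra. }
  set (u := INR i / INR M) in *. set (v := INR (S i) / INR M) in *.
  destruct (mu_MVT a1 a2 t u v) as [c [Hc Hmvt]]; auto; try lra.
  set (l1 := tnorm t (INR (a2 * (M - S i))) (INR (a1 * S i))).
  set (l2 := tnorm t (INR (a2 * (M - i))) (INR (a1 * i))).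
  assert (El1 : l1 = INR x * mu a1 a2 t v) by (apply HL, Hfact; auto).
  assert (El2 : l2 = INR x * mu a1 a2 t u) by (apply HL, Hfact; lia).
  assert (HXp : 0 < INR x) by (apply lt_0_INR; auto).
  exists (l2 - l1). split.
  - exists x. split.
    { exists (a2 * M)%nat, 0%nat. unfold x. ring. }
    exists l1, l2. split; [|split; [|split; [|split]]].
    + exists (a2 * (M - S i))%nat, (a1 * S i)%nat. split; [apply Hfact; auto | reflexivity].
    + exists (a2 * (M - i))%nat, (a1 * i)%nat. split; [apply Hfact; lia | reflexivity].
    + rewrite El1, El2. apply Rmult_lt_compat_l; auto. apply Dec; lra.
    + intros l [m [nn [Hf ->]]].
      assert (Hdiv : Nat.divide a1 nn).
      { apply (Nat.gauss a1 a2 nn); auto.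
        apply (Nat.divide_add_cancel_r a1 (m * a1)).
        - apply Nat.divide_factor_r.
        - unfold factorization in Hf. rewrite (Nat.mul_comm a2 nn), Hf. unfold x.
          rewrite <- Nat.mul_assoc. apply Nat.divide_factor_l. }
      destruct Hdiv as [q ->]. rewrite (Nat.mul_comm q a1) in *.
      assert (HqM : (q <= M)%nat).
      { unfold factorization, x in Hf. nia. }
      rewrite HL by auto.
      rewrite El1, El2. intros [Hl1 Hl2].
      assert (HqM' : INR q / INR M <= 1).
      { apply le_INR in HqM. assert (INR q / INR M * INR M = INR q) by (field; lra).
        destruct (Rle_dec (INR q / INR M) 1); auto. nra. }
      destruct (le_lt_dec q i) as [Hqi|Hqi].
      * apply le_INR in Hqi.
        assert (INR q / INR M <= u).
        { unfold u. unfold Rdiv. apply Rmult_le_compat_r; auto. left; apply Rinv_0_lt_compat; lra. }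
        assert (mu a1 a2 t u <= mu a1 a2 t (INR q / INR M)).
        { apply Hwdec; try lra. split; auto. apply Rdiv_le_0_compat; [apply pos_INR|lra]. }
        nra.
      * assert (Hq2 : v <= INR q / INR M).
        { unfold v. unfold Rdiv. apply Rmult_le_compat_r; [left; apply Rinv_0_lt_compat; lra|].
          apply le_INR; lia. }
        assert (mu a1 a2 t (INR q / INR M) <= mu a1 a2 t v).
        { destruct (Rle_dec (INR q / INR M) r0').
          - apply Hwdec; lra.
          - pose proof (Le (INR q / INR M) ltac:(lra)).
            pose proof (Hwdec v r0' ltac:(lra) ltac:(lra)). lra. }
        nra.
    + reflexivity.
  - assert (Hd : l2 - l1 = INR a1 * INR a2 * G c).
    { rewrite El1, El2, HX.
      replace (INR a1 * INR a2 * INR M * mu a1 a2 t u - INR a1 * INR a2 * INR M * mu a1 a2 t v)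
        with (- (INR a1 * INR a2 * INR M) * (mu a1 a2 t v - mu a1 a2 t u)) by ring.
      rewrite Hmvt. unfold G. replace (v - u) with (1 / INR M) by lra. field. lra. }
    rewrite Hd.
    assert (Hball : ball rs delta c).
    { change (Rabs (c - rs) < delta).
      assert (2 / INR M = (INR i + 2) / INR M - u) by (unfold u; field; lra).
      apply Rabs_def1; lra. }
    specialize (Hdelta c Hball).
    change (Rabs (G c - G rs) < eps / (INR a1 * INR a2)) in Hdelta.
    rewrite HGrs in Hdelta.
    replace (INR a1 * INR a2 * G c - y) with (INR a1 * INR a2 * (G c - tau)) by (unfold tau; field; lra).
    rewrite Rabs_mult, (Rabs_pos_eq (INR a1 * INR a2)) by lra.
    apply (Rmult_lt_compat_l (INR a1 * INR a2)) in Hdelta; auto.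
    replace (INR a1 * INR a2 * (eps / (INR a1 * INR a2))) with eps in Hdelta by (field; lra).
    exact Hdelta.
Qed.
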